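(* Let $m\ge 2$ and $d\ge 1$ be integers, $n=md$, $a,c>0$, and $q=\frac{ad}{2c}+1$. Let $G_R$ be the $m\times m$ matrix with entries $(G_R)_{kl}=-\frac{d}{2cm}|k-l|(m-|k-l|)$. Then $G_R^{-1}+\frac{a}{m}(mI_m-J_m)$ is invertible and $$M_R:=\Bigl(G_R^{-1}+\frac{a}{m}(mI_m-J_m)\Bigr)^{-1}=\mathrm{circ}(m_1,\dots,m_m),\qquad m_j=\frac{d\,[U_{j-2}(q)+U_{m-j}(q)]}{2c\,[T_m(q)-1]}-\frac{12c+ad(m^2-1)}{12acm},\quad j=1,\dots,m.$$
   Context: $\mathrm{circ}(m_1,\dots,m_m)$ denotes the $m\times m$ circulant matrix whose $(k,l)$ entry is $m_{((l-k)\bmod m)+1}$. $I_m$ is the identity, $J_m$ the all-ones matrix. $T_k,U_k$ are the Chebyshev polynomials of the first and second kind ($T_0=1,T_1=x,U_0=1,U_1=2x$, recurrence $p_{k+1}=2xp_k-p_{k-1}$), with the convention $U_{-1}=0$. ($G_R$ is invertible for $m\ge2$.) *)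

(* Defs.v *)
From HB Require Import structures.
From mathcomp Require Import all_boot all_order all_algebra.
Set Implicit Arguments. Unset Strict Implicit. Unset Printing Implicit Defensive.
Import Order.TTheory GRing.Theory Num.Theory.
Local Open Scope ring_scope.

Fixpoint chebT {R : ringType} (x : R) (k : nat) : R :=
  match k with
  | 0 => 1
  | 1 => x
  | S ((S k2) as k1) => 2 * x * chebT x k1 - chebT x k2
  end.

Fixpoint chebU {R : ringType} (x : R) (k : nat) : R :=
  match k with
  | 0 => 1
  | 1 => 2 * x
  | S ((S k2) as k1) => 2 * x * chebU x k1 - chebU x k2
  end.

(* U_k for an integer index k, with the convention U_{-1} = 0
   (indices < -1 never occur in the statement; they are set to 0 too). *)
Definition chebUz {R : ringType} (x : R) (k : int) : R :=
  match k with
  | Posz n => chebU x n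
  | Negz _ => 0
  end.

(* circ(f 1, ..., f m): the m x m matrix whose (k,l) entry (1-indexed) is
   f (((l - k) mod m) + 1).  With 0-indexed k l : 'I_m this is
   f (((l + m - k) %% m) + 1). *)
Definition circ {R : Type} (m : nat) (f : nat -> R) : 'M[R]_m :=
  \matrix_(k < m, l < m) f (((l + m - k) %% m).+1)%N.

Definition GR {R : fieldType} (m d : nat) (c : R) : 'M[R]_m :=
  \matrix_(k < m, l < m)
    (- (d%:R / (2 * c * m%:R)) * (`|(k : nat) - (l : nat)|%N)%:R
       * (m%:R - (`|(k : nat) - (l : nat)|%N)%:R)).

(* Main.v *)
Require Import Defs.
From HB Require Import structures.
From mathcomp Require Import all_boot all_order all_algebra.
From mathcomp Require Import ring lra zify.
Import Order.TTheory GRing.Theory Num.Theory.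
Local Open Scope ring_scope.

Section Circ.
Variable R : comRingType.
Variable n : nat.
Local Notation m := n.+2.
Local Notation I := 'I_m.

Definition cmx (f : I -> R) : 'M[R]_m := \matrix_(k, l) f (l - k).
Definition conv (f g : I -> R) (t : I) := \sum_(i : I) f i * g (t - i).

Lemma mul_cmx f g : cmx f *m cmx g = cmx (conv f g).
Proof.
apply/matrixP => k l; rewrite !mxE /conv.
rewrite (reindex_inj (addIr k)) /=.
apply: eq_bigr => i _; rewrite !mxE addrK; congr (_ * g _).
by rewrite opprD addrA addrAC.
Qed.

Lemma sum_delta (a t : I) (g : I -> R) :
  \sum_(i : I) (i == a)%:R * g (t - i) = g (t - a).
Proof.
rewrite (bigD1 a) //= big1 => [|i /negPf ->]; last by rewrite mul0r.
by rewrite eqxx mul1r addr0.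
Qed.

Lemma sum_shift (t : I) (g : I -> R) :
  \sum_(i : I) g (t - i) = \sum_(i : I) g i.
Proof.
have inj : injective (fun i : I => t - i).
  by apply: (can_inj (g := fun i : I => t - i)) => i; rewrite opprB addrC subrK.
by rewrite [RHS](reindex_inj inj).
Qed.

Lemma conv_comb (x y z w : R) (g : I -> R) t :
  conv (fun i => x * (i == 0)%:R + y * (i == 1)%:R + z * (i == -1)%:R + w) g t
  = x * g t + y * g (t - 1) + z * g (t + 1) + w * \sum_(i : I) g i.
Proof.
rewrite /conv.
under eq_bigr do rewrite !mulrDl -!mulrA.
rewrite !big_split /= -!mulr_sumr !sum_delta sum_shift subr0 opprK.
by [].
Qed.

Lemma cmxD f g : cmx f + cmx g = cmx (fun i => f i + g i).
Proof. by apply/matrixP => k l; rewrite !mxE. Qed.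

Lemma cmxZ x f : x *: cmx f = cmx (fun i => x * f i).
Proof. by apply/matrixP => k l; rewrite !mxE. Qed.

Lemma cmx1 : (1%:M : 'M[R]_m) = cmx (fun i => (i == 0)%:R).
Proof. by apply/matrixP => k l; rewrite !mxE subr_eq0 eq_sym. Qed.

Lemma cmxJ : (const_mx 1 : 'M[R]_m) = cmx (fun _ => 1).
Proof. by apply/matrixP => k l; rewrite !mxE. Qed.

Lemma val_sub (k l : I) : val (l - k) = ((l + m - k) %% m)%N.
Proof.
rewrite /= modnDmr addnBA //; exact: ltnW.
Qed.

Lemma val_add (k l : I) : val (l + k) = ((l + k) %% m)%N.
Proof. by []. Qed.

End Circ.
Arguments cmx {R n} f.
Arguments conv {R n} f g t.

Section V.
Variable n : nat.
Local Notation m := n.+2.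
Local Notation I := 'I_m.

Lemma valm1 (t : I) : val (t - 1) = (if (t : nat) == 0 then n.+1 else ((t : nat)).-1)%N.
Proof.
rewrite val_sub /=. have := ltn_ord t. case: eqP => [->|h] ht.
  by rewrite add0n modn_small.
rewrite (_ : (t + n.+2 - 1 = (t.-1) + n.+2)%N); last by lia.
by rewrite modnDr modn_small //; lia.
Qed.

Lemma val1 : val (1 : I) = 1%N.
Proof. by rewrite /= modn_small. Qed.

Lemma valp1 (t : I) : val (t + 1) = (if (t : nat) == n.+1 then 0 else ((t : nat)).+1)%N.
Proof.
rewrite val_add val1. have := ltn_ord t. case: eqP => [->|h] ht.
  by rewrite addn1 modnn.
by rewrite modn_small //; lia.
Qed.

Lemma val_eq0 (t : I) : (t == 0) = ((t : nat) == 0%N).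
Proof. by []. Qed.
End V.

Definition V {R : ringType} (x : R) (k : nat) : R :=
  if k is k'.+1 then chebU x k' else 0.

Section Cheb.
Variable R : comRingType.
Variable x : R.

Lemma VS2 k : V x k.+2 = 2 * x * V x k.+1 - V x k.
Proof. by case: k => [|[|k]] //=; rewrite mulr1 subr0. Qed.

Lemma chebUz_V k : chebUz x (k%:Z - 1) = V x k.
Proof.
case: k => [|k]; first by rewrite sub0r.
have -> : ((k.+1)%:Z - 1 = k%:Z)%R by rewrite -addn1 PoszD addrK.
by [].
Qed.

Lemma chebTS2 k : chebT x k.+2 = 2 * x * chebT x k.+1 - chebT x k.
Proof. by []. Qed.

Lemma chebT_V2 k : (2 * chebT x k.+1 = V x k.+2 - V x k) /\ (2 * chebT x k.+2 = V x k.+3 - V x k.+1).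
Proof.
elim: k => [|k [IH1 IH2]].
  by split; rewrite /= ?mulr1; ring.
split => //.
rewrite chebTS2 (_ : 2 * (2 * x * chebT x k.+2 - chebT x k.+1) =
  2 * x * (2 * chebT x k.+2) - 2 * chebT x k.+1); last by ring.
rewrite IH1 IH2.
rewrite (VS2 k.+2) (VS2 k.+1) (VS2 k); ring.
Qed.

Lemma chebT_V k : 2 * chebT x k.+1 = V x k.+2 - V x k.
Proof. by case: (chebT_V2 k). Qed.

Lemma sumV N : (2 * x - 2) * \sum_(i < N.+1) V x i = V x N.+1 - V x N - 1.
Proof.
elim: N => [|N IH]; first by rewrite big_ord1 /= mulr0; ring.
rewrite big_ord_recr mulrDr IH VS2; ring.
Qed.
End Cheb.

Search "big_ord_rev" .
Search (\sum_(_ < _) _ (_ - _)%N).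
Arguments VS2 {R} x k.
Arguments chebUz_V {R} x k.
Arguments chebT_V {R} x k.
Arguments sumV {R} x N.
Arguments V : simpl never.
Arguments chebT : simpl never.
Lemma V1 {R : ringType} (x : R) : V x 1 = 1. Proof. by []. Qed.
Lemma V0 {R : ringType} (x : R) : V x 0 = 0. Proof. by []. Qed.
Lemma V2 {R : ringType} (x : R) : V x 2 = 2 * x. Proof. by []. Qed.

Section Main.
Variable R : realFieldType.
Variable n : nat.
Local Notation m := n.+2.
Local Notation I := 'I_m.
Local Notation mm := (m%:R : R).

Lemma sumHgen (M : R) N :
  6 * \sum_(i < N) ((i : nat)%:R * (M - (i : nat)%:R)) =
  3 * M * N%:R * (N%:R - 1) - (N%:R - 1) * N%:R * (2 * N%:R - 1).
Proof.
elim: N => [|N IH]; first by rewrite big_ord0; ring.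
rewrite big_ord_recr /= mulrDr IH -addn1 natrD; ring.
Qed.

Definition hH (t : I) : R := (t : nat)%:R * (mm - (t : nat)%:R).

Lemma sumH : 6 * \sum_(t : I) hH t = mm * (mm ^+ 2 - 1).
Proof. rewrite /hH sumHgen; ring. Qed.

Lemma lapH (t : I) : hH (t - 1) + hH (t + 1) - 2 * hH t =
   -2 + 2 * mm * (t == 0)%:R.
Proof.
rewrite /hH valm1 valp1 val_eq0.
case: t => [[|u] hu] /=.
  rewrite !mulrS; ring.
case: (eqVneq u n) => [->|hun].
  rewrite eqxx /= !mulrS; ring.
rewrite eqSS (negPf hun) /= !mulrS; ring.
Qed.
Lemma GR_cmx (d : nat) (c : R) :
  GR m d c = cmx (fun t => - (d%:R / (2 * c * mm)) * hH t).
Proof.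
apply/matrixP => k l; rewrite !mxE /hH val_sub -mulrA; congr (_ * _).
have hk := ltn_ord k; have hl := ltn_ord l.
case: (leqP k l) => hkl.
  rewrite distnEr // (_ : ((l + m - k) %% m = l - k)%N) //.
  rewrite (_ : (l + m - k = (l - k) + m)%N); last by lia.
  by rewrite modnDr modn_small //; lia.
rewrite distnEl ?(ltnW hkl) // modn_small; last by lia.
rewrite (_ : (l + m - k = m - (k - l))%N); last by lia.
rewrite !natrB; [ring | lia ..].
Qed.
Lemma cmx_ext (f g : I -> R) : (forall t, f t = g t) -> cmx f = cmx g.
Proof. by move=> h; apply/matrixP => k l; rewrite !mxE h. Qed.

Lemma mm_neq0 : mm != 0.
Proof. by rewrite pnatr_eq0. Qed.

Lemma mm2_neq0 : mm ^+ 2 - 1 != 0.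
Proof.
rewrite subr_eq0 -natrX (_ : 1 = 1%:R) // eqr_nat.
by rewrite expnS; lia.
Qed.

Definition betaG (d : nat) (c : R) (i : I) : R :=
  let k := d%:R / (2 * c * mm) in
  let s := mm * (mm ^+ 2 - 1) / 6 in
  (1 / (k * mm)) * (i == 0)%:R + (- 1 / (2 * k * mm)) * (i == 1)%:R
  + (- 1 / (2 * k * mm)) * (i == -1)%:R + (- 1 / (k * mm * s)).

Lemma Ginv (d : nat) (c : R) : (1 <= d)%N -> c != 0 ->
  cmx (betaG d c) *m GR m d c = 1%:M.
Proof.
move=> hd hc.
have hd' : d%:R != 0 :> R by rewrite pnatr_eq0 -lt0n.
have hm := mm_neq0; have hm2 := mm2_neq0.
rewrite GR_cmx mul_cmx cmx1; apply: cmx_ext => t.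
rewrite /betaG conv_comb -mulr_sumr.
have L := lapH t; have S := sumH.
set e := (t == 0)%:R in L *.
rewrite (_ : hH (t + 1) = -2 + 2 * mm * e - hH (t - 1) + 2 * hH t); last first.
  by rewrite -L; ring.
rewrite (_ : \sum_(i : I) hH i = mm * (mm ^+ 2 - 1) / 6); last first.
  by rewrite -S; field.
field.
have E : 2 + n%:R = mm by rewrite [mm]mulrS [n.+1%:R]mulrS; ring.
by rewrite E hm hc hm2 hd'.
Qed.
Definition wq (q : R) (t : I) : R := V q t + V q (m - t).

Lemma lapW (q : R) (t : I) :
  2 * q * wq q t - wq q (t - 1) - wq q (t + 1) = 2 * (chebT q m - 1) * (t == 0)%:R.
Proof.
rewrite /wq valm1 valp1 val_eq0.
case: t => [[|u] hu] /=.
  rewrite ?subn0 (_ : (m - n.+1 = 1)%N); last by lia.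
  have := chebT_V q n.+1; rewrite (VS2 q n.+1) => hT.
  rewrite mulr1 (_ : (m - 1 = n.+1)%N); last by lia.
  rewrite V0 V1 mulrBr mulr1 hT; ring.
case: (eqVneq u n) => [->|hun].
  rewrite eqxx /= (_ : (m - n.+1 = 1)%N); last by lia.
  rewrite (_ : (m - n = 2)%N); last by lia.
  rewrite ?subn0 mulr0 V0 V1 V2 (VS2 q n); ring.
rewrite eqSS (negPf hun) /= mulr0.
have hun' : (u < n)%N by lia.
rewrite (_ : (m - u.+1 = (n - u.+1).+2)%N); last by lia.
rewrite (_ : (m - u = (n - u.+1).+3)%N); last by lia.
rewrite (_ : (m - u.+2 = (n - u.+1).+1)%N); last by lia.
rewrite (VS2 q u) (VS2 q (n - u.+1).+1); ring.
Qed.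
Lemma sumW (q : R) :
  (2 * q - 2) * \sum_(t : I) wq q t = 2 * (chebT q m - 1).
Proof.
rewrite /wq big_split /=.
have h1 := sumV q n.+1.
have h2 := sumV q n.+2.
rewrite big_ord_recl V0 add0r in h2.
have -> : \sum_(t < m) V q (m - t) = \sum_(i < m) V q (bump 0 i).
  rewrite (reindex_inj rev_ord_inj) /=; apply: eq_bigr => i _.
  congr (V q _); rewrite /bump /=; have := ltn_ord i; lia.
rewrite mulrDr h1 h2 mulrBr chebT_V; ring.
Qed.
Lemma Vmono (q : R) : 1 <= q -> forall k, V q k <= V q k.+1 /\ 1 <= V q k.+1.
Proof.
move=> hq; elim => [|k [IH1 IH2]]; first by rewrite V0 V1; split => //; lra.
rewrite VS2.
have h : 0 <= (2 * q - 2) * V q k.+1 by apply: mulr_ge0; lra.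
split; lra.
Qed.

Lemma sumW_ge (q : R) : 1 <= q -> mm <= \sum_(t : I) wq q t.
Proof.
move=> hq.
have -> : mm = \sum_(t : I) (1 : R) by rewrite sumr_const card_ord.
apply: ler_sum => t _; rewrite /wq.
have h1 : 0 <= V q t.
  case: (nat_of_ord t) => [|k]; first by rewrite V0.
  by have [_ h] := Vmono q hq k; lra.
have h2 : 1 <= V q (m - t).
  have := ltn_ord t; case E: (m - t)%N => [|k]; first by lia.
  by have [_ h] := Vmono q hq k.
lra.
Qed.
Lemma circ_cmx (f : nat -> R) : circ m f = cmx (fun t : I => f (t : nat).+1).
Proof. by apply/matrixP => k l; rewrite !mxE val_sub. Qed.

Lemma chebUz_w (q : R) (t : I) :
  chebUz q ((t : nat).+1%:Z - 2) + chebUz q (m%:Z - (t : nat).+1%:Z) = wq q t.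
Proof.
rewrite /wq.
have -> : ((t : nat).+1%:Z - 2 = (t : nat)%:Z - 1)%R.
  by rewrite -addn1 PoszD -addrA; congr (_ + _).
rewrite chebUz_V; congr (_ + _).
have ht := ltn_ord t.
have -> : (m%:Z - (t : nat).+1%:Z = (m - t)%N%:Z - 1)%R.
  rewrite (_ : (m - t = (m - (t : nat).+1) + 1)%N); last by lia.
  by rewrite PoszD addrK subzn.
by rewrite chebUz_V.
Qed.
End Main.

Lemma conv_ext {R : comRingType} {n : nat} (f f' g : 'I_n.+2 -> R) t :
  (forall i, f i = f' i) -> conv f g t = conv f' g t.
Proof. by move=> h; apply: eq_bigr => i _; rewrite h. Qed.

Theorem lemma4p2 (R : realFieldType) (m d : nat) (a c : R) :
  (2 <= m)%N -> (1 <= d)%N -> 0 < a -> 0 < c ->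
  let q := a * d%:R / (2 * c) + 1 in
  let G := GR m d c in
  let A := invmx G + (a / m%:R) *: (m%:R *: (1%:M : 'M[R]_m) - const_mx 1) in
  G \in unitmx /\ A \in unitmx /\
  invmx A =
    circ m (fun j : nat =>
      d%:R * (chebUz q (j%:Z - 2) + chebUz q (m%:Z - j%:Z))
        / (2 * c * (chebT q m - 1))
      - (12 * c + a * d%:R * (m%:R ^+ 2 - 1)) / (12 * a * c * m%:R)).
Proof.
case: m => [|[|n]] // _ hd ha hc q G A.
have hc0 : c != 0 by rewrite gt_eqF.
have ha0 : a != 0 by rewrite gt_eqF.
have hd0 : d%:R != 0 :> R by rewrite pnatr_eq0 -lt0n.
have hm := @mm_neq0 R n; have hm2 := @mm2_neq0 R n.
have hG := @Ginv R n d c hd hc0.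
have [_ uG] := mulmx1_unit hG.
have invG : invmx G = cmx (betaG R n d c).
  by rewrite -[LHS]mul1mx -hG -mulmxA mulmxV // mulmx1.
set k := d%:R / (2 * c * n.+2%:R).
set s := n.+2%:R * (n.+2%:R ^+ 2 - 1) / 6 : R.
have hmp : 0 < n.+2%:R :> R by rewrite ltr0n.
have hdp : 0 < d%:R :> R by rewrite ltr0n.
have hk : k != 0.
  suff : 0 < k by move/gt_eqF->.
  by rewrite /k divr_gt0 // !mulr_gt0.
have hs : s != 0.
  suff : 0 < s by move/gt_eqF->.
  rewrite /s divr_gt0 // mulr_gt0 // subr_gt0.
  by rewrite -natrX ltr1n expnS; lia.
have E : 2 + n%:R = n.+2%:R :> R by rewrite [n.+2%:R]mulrS [n.+1%:R]mulrS; ring.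
set X := 1 / (k * n.+2%:R) + a.
set Y := - 1 / (2 * k * n.+2%:R).
set W := - 1 / (k * n.+2%:R * s) - a / n.+2%:R.
set alpha := fun i : 'I_n.+2 => X * (i == 0)%:R + Y * (i == 1)%:R + Y * (i == -1)%:R + W.
have hA : A = cmx alpha.
  rewrite /A invG; apply/matrixP => i j; rewrite !mxE.
  rewrite /alpha /betaG /X /Y /W -/k -/s subr_eq0 eq_sym.
  by field; rewrite E hm hs hk.
have hq1 : 1 <= q.
  rewrite /q lerDr; apply: divr_ge0; last by rewrite mulr_ge0 // ltW.
  by rewrite mulr_ge0 // ltW.
have hq2 : 0 < 2 * q - 2.
  rewrite /q (_ : 2 * (a * d%:R / (2 * c) + 1) - 2 = a * d%:R / c); last first.
    by field.
  by rewrite divr_gt0 // mulr_gt0.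
rewrite circ_cmx.
set T := chebT q n.+2.
set dc := (12 * c + a * d%:R * (n.+2%:R ^+ 2 - 1)) / (12 * a * c * n.+2%:R).
have hSW := sumW R n q; have hge := sumW_ge R n q hq1.
rewrite -/T in hSW.
have hT : T - 1 != 0.
  suff : 0 < T - 1 by move/gt_eqF->.
  have : 0 < (2 * q - 2) * \sum_(t : 'I_n.+2) wq R n q t.
    by rewrite mulr_gt0 //; apply: lt_le_trans hge.
  by rewrite hSW; nra.
set omega := fun t : 'I_n.+2 => d%:R * (wq R n q t) / (2 * c * (T - 1)) - dc.
have hC : cmx (fun t : 'I_n.+2 =>
      d%:R * (chebUz q ((t : nat).+1%:Z - 2) + chebUz q (n.+2%:Z - (t : nat).+1%:Z))
        / (2 * c * (T - 1)) - dc) = cmx omega.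
  by apply: cmx_ext => t; rewrite chebUz_w.
rewrite hC.
have key : A *m cmx omega = 1%:M.
  rewrite hA mul_cmx cmx1; apply: cmx_ext => t.
  rewrite /alpha conv_comb.
  have So : \sum_(i : 'I_n.+2) omega i =
     d%:R * (\sum_(i : 'I_n.+2) wq R n q i) / (2 * c * (T - 1)) - n.+2%:R * dc.
    rewrite /omega sumrB -mulr_suml -mulr_sumr sumr_const card_ord.
    by rewrite -[dc *+ _]mulr_natl.
  rewrite So /omega.
  have L := lapW R n q t; rewrite -/T in L.
  rewrite (_ : wq R n q (t + 1) = 2 * q * wq R n q t - wq R n q (t - 1)
        - 2 * (T - 1) * (t == 0)%:R); last by rewrite -L; ring.
  rewrite (_ : \sum_(i : 'I_n.+2) wq R n q i = 2 * (T - 1) / (2 * q - 2)); last first.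
    by rewrite -hSW; field; rewrite gt_eqF.
  rewrite /X /Y /W /k /s /dc /q.
  field.
  rewrite E hm hc0 ha0 hT hm2 hd0 /=.
  rewrite (_ : a * d%:R + 2 * c + -2 * c = a * d%:R); last by ring.
  by rewrite mulf_neq0.
have [uA _] := mulmx1_unit key.
split => //; split => //.
by rewrite -[LHS]mulmx1 -key mulmxA mulVmx // mul1mx.
Qed.
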